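(* Let $G$ be a group with generating set $S$ not containing the identity, and let $g,h$ be distinct elements of $G$. Then $d_C(g,h)$ equals the minimum number of distinct colors of arcs occurring in an (undirected) path connecting $g$ and $h$ in the Cayley color digraph of $G$ with respect to $S$.
   Context: The cardinal norm is $\|x\| = \min\{|A| : A\subseteq S,\ x\in\langle A\rangle\}$, where $\langle A\rangle$ is the subgroup generated by $A$, and the cardinal metric is $d_C(g,h)=\|g^{-1}h\|$. The Cayley color digraph of $G$ with respect to $S$ has vertex set $G$, and for each $x\in G$ and $c\in S$ an arc $(x,xc)$ with color $c$ (distinct elements of $S$ are distinct colors). An undirected path from $g$ to $h$ is a sequence $g=x_0,e_1,x_1,\dots,e_n,x_n=h$ of vertices and arcs with $e_i\in\{(x_{i-1},x_i),(x_i,x_{i-1})\}$ for each $i$; its colors are the colors of the arcs $e_i$. *)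

(* Defs.v *)
From Stdlib Require Import List.
Import ListNotations.

Record Group := {
  carrier :> Type;
  gmul : carrier -> carrier -> carrier;
  gone : carrier;
  ginv : carrier -> carrier;
  gmulA : forall x y z, gmul x (gmul y z) = gmul (gmul x y) z;
  gmul1g : forall x, gmul gone x = x;
  gmulVg : forall x, gmul (ginv x) x = gone
}.

Arguments gmul {g}. Arguments gone {g}. Arguments ginv {g}.

Inductive gen {G : Group} (A : G -> Prop) : G -> Prop :=
| gen_one : gen A gone
| gen_in : forall a, A a -> gen A a
| gen_mul : forall x y, gen A x -> gen A y -> gen A (gmul x y)
| gen_inv : forall x, gen A x -> gen A (ginv x).

Definition generates {G : Group} (S : G -> Prop) : Prop := forall x : G, gen S x.

Definition IsLeast (P : nat -> Prop) (n : nat) : Prop :=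
  P n /\ forall m, P m -> n <= m.

Definition norm_witness {G : Group} (S : G -> Prop) (x : G) (k : nat) : Prop :=
  exists A : list G, NoDup A /\ (forall a, In a A -> S a) /\
    gen (fun a => In a A) x /\ length A = k.

Definition dC_is {G : Group} (S : G -> Prop) (g h : G) (n : nat) : Prop :=
  IsLeast (norm_witness S (gmul (ginv g) h)) n.

(* An undirected path in the Cayley color digraph, starting at a vertex x,
   is a list of steps (b, c) with c in S the color of the traversed arc:
   b = true : traverse arc (x, x c) forwards, reaching x c;
   b = false: traverse arc (x c^{-1}, x) backwards, reaching x c^{-1}. *)
Fixpoint path_end {G : Group} (x : G) (p : list (bool * G)) : G :=
  match p with
  | [] => x
  | (b, c) :: p' => path_end (if b then gmul x c else gmul x (ginv c)) p'
  end.

Definition is_path {G : Group} (S : G -> Prop) (g h : G) (p : list (bool * G)) : Prop :=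
  (forall s, In s p -> S (snd s)) /\ path_end g p = h.

Definition num_colors {G : Group} (p : list (bool * G)) (k : nat) : Prop :=
  exists C : list G, NoDup C /\ (forall c, In c C <-> In c (map snd p)) /\ length C = k.

Definition path_colors_witness {G : Group} (S : G -> Prop) (g h : G) (k : nat) : Prop :=
  exists p, is_path S g h p /\ num_colors p k.

(* Main.v *)
Require Import Defs.
From Stdlib Require Import List Classical Lia.
Import ListNotations.

Section S.
Variable G : Group.

Lemma ee (x : G) : gmul (gmul x (ginv x)) (gmul x (ginv x)) = gmul x (ginv x).
Proof.
  rewrite <- (gmulA _ x (ginv x)). rewrite (gmulA _ (ginv x) x). rewrite gmulVg, gmul1g. reflexivity.
Qed.

Lemma mulgV (x : G) : gmul x (ginv x) = gone.
Proof.
  set (e := gmul x (ginv x)).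
  transitivity (gmul (gmul (ginv e) e) e).
  - rewrite gmulVg, gmul1g. reflexivity.
  - rewrite <- gmulA. unfold e at 2 3. rewrite ee. fold e. apply gmulVg.
Qed.

Lemma mulg1 (x : G) : gmul x gone = x.
Proof. rewrite <- (gmulVg _ x), gmulA, mulgV, gmul1g. reflexivity. Qed.

Lemma gen_mono (A B : G -> Prop) x : (forall a, A a -> B a) -> gen A x -> gen B x.
Proof. intros H Hx; induction Hx; eauto using gen. Qed.

Lemma dedup (l : list G) : exists C, NoDup C /\ (forall c, In c C <-> In c l).
Proof.
  induction l as [|a l [C [HC HM]]].
  - exists []. split. constructor. simpl; tauto.
  - destruct (classic (In a C)).
    + exists C. split; auto. intro c; simpl; rewrite <- HM; split; auto.
      intros [<-|]; auto.
    + exists (a :: C). split. constructor; auto. intro c; simpl; rewrite HM; tauto.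
Qed.

Lemma gen_fin (S : G -> Prop) x : gen S x ->
  exists A : list G, NoDup A /\ (forall a, In a A -> S a) /\ gen (fun a => In a A) x.
Proof.
  induction 1.
  - exists []. repeat split; [constructor| simpl; tauto | constructor].
  - exists [a]. repeat split. repeat constructor; simpl; tauto.
    simpl; intros ? [<-|[]]; auto. apply gen_in; simpl; auto.
  - destruct IHgen1 as [A [HA1 [HA2 HA3]]]. destruct IHgen2 as [B [HB1 [HB2 HB3]]].
    destruct (dedup (A ++ B)) as [C [HC1 HC2]].
    exists C. repeat split; auto.
    + intros a Ha. apply HC2 in Ha. apply in_app_or in Ha. destruct Ha; auto.
    + apply gen_mul; eapply gen_mono; try eassumption; intros a Ha; apply HC2; apply in_or_app; auto.
  - destruct IHgen as [A [HA1 [HA2 HA3]]]. exists A. repeat split; auto. apply gen_inv; auto.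
Qed.

Definition step (y : G) (s : bool * G) : G :=
  if fst s then gmul y (snd s) else gmul y (ginv (snd s)).

Definition invp (p : list (bool * G)) := rev (map (fun s => (negb (fst s), snd s)) p).

Lemma path_end_app (y : G) p q : path_end y (p ++ q) = path_end (path_end y p) q.
Proof.
  revert y; induction p as [|[b c] p IH]; intro y; simpl; auto.
Qed.

Lemma path_end_invp (y : G) p : path_end (path_end y p) (invp p) = y.
Proof.
  revert y; induction p as [|[b c] p IH]; intro y; simpl; auto.
  unfold invp in *. simpl. rewrite path_end_app, IH. simpl.
  destruct b; simpl.
  - rewrite <- gmulA, mulgV, mulg1; auto.
  - rewrite <- gmulA, gmulVg, mulg1; auto.
Qed.

Lemma in_invp s p : In s (map snd (invp p)) -> In s (map snd p).
Proof.
  unfold invp. rewrite map_rev, <- in_rev, map_map. simpl. auto.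
Qed.

Lemma gen_path (A : list G) x : gen (fun a => In a A) x ->
  forall w, exists p, (forall s, In s (map snd p) -> In s A) /\ path_end w p = gmul w x.
Proof.
  induction 1; intro w.
  - exists []. split. simpl; tauto. simpl. rewrite mulg1; auto.
  - exists [(true, a)]. split. simpl. intros s [<-|[]]; auto. reflexivity.
  - destruct (IHgen1 w) as [p [Hp1 Hp2]]. destruct (IHgen2 (gmul w x)) as [q [Hq1 Hq2]].
    exists (p ++ q). split.
    + intros s Hs. rewrite map_app in Hs. apply in_app_or in Hs. destruct Hs; auto.
    + rewrite path_end_app, Hp2, Hq2, gmulA; auto.
  - destruct (IHgen (gmul w (ginv x))) as [p [Hp1 Hp2]].
    exists (invp p). split.
    + intros s Hs; apply Hp1, in_invp, Hs.
    + rewrite <- gmulA, gmulVg, mulg1 in Hp2.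
      transitivity (path_end (path_end (gmul w (ginv x)) p) (invp p)); [rewrite Hp2; auto | apply path_end_invp].
Qed.

Lemma path_gen (C : list G) p : (forall s, In s (map snd p) -> In s C) ->
  forall y, exists z, gen (fun a => In a C) z /\ path_end y p = gmul y z.
Proof.
  induction p as [|[b c] p IH]; intros HC y; simpl.
  - exists gone. split. constructor. rewrite mulg1; auto.
  - assert (Hc : In c C) by (apply HC; simpl; auto).
    destruct (IH (fun s Hs => HC s (or_intror Hs)) (if b then gmul y c else gmul y (ginv c)))
      as [z [Hz1 Hz2]].
    destruct b.
    + exists (gmul c z). split. apply gen_mul; auto. apply gen_in; auto.
      rewrite Hz2, gmulA; auto.
    + exists (gmul (ginv c) z). split. apply gen_mul; auto. apply gen_inv, gen_in; auto.
      rewrite Hz2, gmulA; auto.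
Qed.

Lemma least_exists (P : nat -> Prop) k : P k -> exists n, IsLeast P n.
Proof.
  induction k as [k IH] using (well_founded_induction Wf_nat.lt_wf).
  intro Hk.
  destruct (classic (exists m, m < k /\ P m)) as [[m [Hm1 Hm2]]|Hn].
  - eapply IH; eauto.
  - exists k. split; auto. intros m Hm. destruct (Compare_dec.le_lt_dec k m); auto.
    exfalso; apply Hn; eauto.
Qed.

End S.

Theorem mainTheorem9 (G : Group) (S : G -> Prop)
  (hgen : generates S) (h1 : ~ S gone) (g h : G) (hgh : g <> h) :
  exists n : nat, dC_is S g h n /\ IsLeast (path_colors_witness S g h) n.
Proof.
  assert (PN : forall k, path_colors_witness S g h k -> norm_witness S (gmul (ginv g) h) k).
  { intros k [p [[Hp1 Hp2] [C [HC1 [HC2 HC3]]]]].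
    exists C. repeat split; auto.
    - intros a Ha. apply HC2 in Ha. apply in_map_iff in Ha. destruct Ha as [s [<- Hs]]. auto.
    - destruct (path_gen G C p (fun s Hs => proj2 (HC2 s) Hs) g) as [z [Hz1 Hz2]].
      rewrite Hp2 in Hz2. rewrite Hz2, gmulA, gmulVg, gmul1g. auto. }
  assert (NP : forall k, norm_witness S (gmul (ginv g) h) k ->
             exists k', k' <= k /\ path_colors_witness S g h k').
  { intros k [A [HA1 [HA2 [HA3 HA4]]]].
    destruct (gen_path G A _ HA3 g) as [p [Hp1 Hp2]].
    rewrite gmulA, mulgV, gmul1g in Hp2.
    destruct (dedup G (map snd p)) as [C [HC1 HC2]].
    exists (length C). split.
    - subst k. apply NoDup_incl_length; auto. intros a Ha; apply Hp1, HC2, Ha.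
    - exists p. split.
      + split; auto. intros s Hs. apply HA2, Hp1. apply in_map; auto.
      + exists C. auto. }
  destruct (gen_fin G S _ (hgen (gmul (ginv g) h))) as [A [HA1 [HA2 HA3]]].
  destruct (least_exists (norm_witness S (gmul (ginv g) h)) (length A)) as [n [Hn1 Hn2]].
  { exists A; auto. }
  exists n. split. split; auto.
  destruct (NP n Hn1) as [k' [Hk1 Hk2]].
  assert (n <= k') by (apply Hn2, PN, Hk2).
  assert (k' = n) by lia. subst k'.
  split; [exact Hk2 | intros m Hm; apply Hn2, PN, Hm].
Qed.
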